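(* For every constant $c>0$ there is a constant $C$ such that for every $n\ge2$, every string $x$ of length $n$ and every $i\in\{1,\dots,n\}$, with probability at least $1-n^{-c}$ (over the random hash function), the number of increasing nodes on the path from the root of the DDT of $x$ to the $i$-th leaf is at most $C\log_2 n$.
   Context: Data Dependent Tree (DDT). Fix a string $x=x_1\cdots x_n$ and a hash function $h$, modeled as follows: $h$ assigns to every possible input (a character, or a finite tuple of integers) a value in a totally ordered set; equal inputs receive equal values, distinct inputs receive distinct values, and the relative order of the values of distinct inputs is uniformly random (as for a uniformly random injection), independent of $x$. The DDT of $x$ is a rooted tree built level by level. Level $0$ consists of $n$ leaves in left-to-right order, the $i$-th storing $x_i$, with hash $h(x_i)$. Levels $1,2,3,\dots$ alternate between duplicate levels (odd $\ell$) and increasing levels (even $\ell$). At a duplicate level $\ell$, the nodes of level $\ell-1$ (left to right) are partitioned into maximal runs of consecutive nodes with equal hash; each run $c_1,\dots,c_k$ becomes the ordered list of children of a new duplicate node at level $\ell$ with hash $h(\langle \ell,k,h(c_1)\rangle)$. At an increasing level $\ell$, the nodes of level $\ell-1$ are partitioned into maximal runs of consecutive nodes whose hashes are strictly increasing left to right; each run $c_1,\dots,c_k$ becomes the ordered children of a new increasing node at level $\ell$ with hash $h(\langle \ell,h(c_1),\dots,h(c_k)\rangle)$. Construction stops at the first level consisting of a single node (the root). The height is the number of levels above level $0$. The string induced by a node is the concatenation, left to right, of the characters at the leaves of its subtree. *)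

(* Defs.v *)
From HB Require Import structures.
From mathcomp Require Import all_boot all_order all_algebra.
From mathcomp Require Import all_classical all_reals all_analysis.

Set Implicit Arguments. Unset Strict Implicit. Unset Printing Implicit Defensive.
Import Order.TTheory GRing.Theory Num.Theory.

(* Hash inputs, up to the identification "equal hash <-> equal input".       *)
(* Since h is injective, the input <l,k,h(c1)> of a duplicate node is        *)
(* determined by (l, k, input of c1), and the input <l,h(c1),..,h(ck)> of an *)
(* increasing node by (l, inputs of c1..ck).  We therefore represent the     *)
(* hash of a node by its (structural) input term; the random hash function  *)
(* becomes a random injective real-valued key on terms whose relative order  *)
(* on every finite set of distinct terms is uniformly random.               *)
Inductive term (A : Type) :=
| Chr of A
| Dup of nat & nat & term A     (* <l, k, h(c1)>                            *)
| Inc of nat & seq (term A).    (* <l, h(c1), ..., h(ck)>                   *)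

Arguments Chr {A}. Arguments Dup {A}. Arguments Inc {A}.

Section TermEq.
Variable A : eqType.

Fixpoint term_eqb (t u : term A) : bool :=
  match t, u with
  | Chr a, Chr b => a == b
  | Dup l k t', Dup l' k' u' => (l == l') && (k == k') && term_eqb t' u'
  | Inc l ts, Inc l' us =>
      (l == l') &&
      (fix eqs (ts us : seq (term A)) : bool :=
         match ts, us with
         | [::], [::] => true
         | t :: ts, u :: us => term_eqb t u && eqs ts us
         | _, _ => false
         end) ts us
  | _, _ => false
  end.

Lemma term_eqbP : forall t u : term A, reflect (t = u) (term_eqb t u).
Proof.
fix IH 1 => t u.
case: t => [a|l k t|l ts]; case: u => [b|l' k' u|l' us] /=; try by constructor.
- by apply: (iffP eqP) => [->|[]].
- case: eqP => [->|nl]; last by constructor => -[].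
  case: eqP => [->|nk]; last by constructor => -[].
  by case: (IH t u) => [->|nt]; constructor => // -[].
- case: eqP => [->|nl]; last by constructor => -[].
  have H : reflect (ts = us)
    ((fix eqs (ts us : seq (term A)) : bool :=
         match ts, us with
         | [::], [::] => true
         | t :: ts, u :: us => term_eqb t u && eqs ts us
         | _, _ => false
         end) ts us).
    move: ts us; fix IHl 1 => ts us.
    case: ts => [|t ts]; case: us => [|u us]; try by constructor.
    case: (IH t u) => [->|nt]; last by constructor => -[].
    by case: (IHl ts us) => [->|nts]; constructor => // -[].
  by case: H => [->|nts]; constructor => // -[].
Qed.

HB.instance Definition _ := hasDecEq.Build (term A) term_eqbP.
End TermEq.

Fixpoint runs (T : Type) (r : T -> T -> bool) (s : seq T) : seq (seq T) :=
  match s with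
  | [::] => [::]
  | x :: s' =>
      match runs r s' with
      | (y :: t) :: rest =>
          if r x y then (x :: y :: t) :: rest else [:: x] :: (y :: t) :: rest
      | _ => [:: [:: x]]
      end
  end.

Section DDT.
Variables (R : realType) (A : eqType) (key : term A -> R) (x : seq A).

(* partition of level l-1 performed at level l (l >= 1):
   odd l = duplicate level, even l = increasing level *)
Definition ddt_groups (l : nat) (prev : seq (term A)) : seq (seq (term A)) :=
  if odd l then runs (fun a b => a == b) prev
  else runs (fun a b => (key a < key b)%R) prev.

Definition ddt_node (l : nat) (c : seq (term A)) : term A :=
  if odd l then Dup l (size c) (head (Inc 0 [::]) c) else Inc l c.

(* nodes of level l, left to right (levels keep being computed after the
   root is reached; only levels up to the height are used) *)
Fixpoint ddt_level (l : nat) : seq (term A) :=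
  match l with
  | 0 => map Chr x
  | l'.+1 => map (ddt_node l'.+1) (ddt_groups l'.+1 (ddt_level l'))
  end.

Fixpoint group_index (sz : seq nat) (p : nat) : nat :=
  match sz with
  | [::] => 0
  | s :: sz' => if p < s then 0 else (group_index sz' (p - s)).+1
  end.

Fixpoint ddt_anc (i l : nat) : nat :=
  match l with
  | 0 => i
  | l'.+1 => group_index (map size (ddt_groups l'.+1 (ddt_level l'))) (ddt_anc i l')
  end.

Definition ddt_height_is (H : nat) : Prop :=
  size (ddt_level H) = 1%N /\ forall l, (l < H)%N -> size (ddt_level l) <> 1%N.

Definition is_inc_node (t : term A) : bool := if t is Inc _ _ then true else false.

Definition inc_on_path (H i : nat) : nat :=
  count (fun l => if onth (ddt_level l) (ddt_anc i l) is Some t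
                  then is_inc_node t else false) (iota 0 H.+1).
End DDT.

(* Main.v *)
Require Import Defs.
From HB Require Import structures.
From mathcomp Require Import all_boot all_order all_algebra.
From mathcomp Require Import all_classical all_reals all_analysis.
Import Order.TTheory GRing.Theory Num.Theory.
Set Implicit Arguments. Unset Strict Implicit. Unset Printing Implicit Defensive.
From mathcomp Require Import measurable_realfun.
From mathcomp Require Import ring lra.
From mathcomp Require Import zify.
Section Runs.
Variables (X : eqType) (r : rel X).

Definition runs_step (x : X) (rs : seq (seq X)) :=
  match rs with
  | (y :: t) :: rest =>
      if r x y then (x :: y :: t) :: rest else [:: x] :: (y :: t) :: rest
  | _ => [:: [:: x]]
  end.

Lemma runsC y s : runs r (y :: s) = runs_step y (runs r s).
Proof. by []. Qed.

Lemma runs_cons_ex y s : exists t rest, runs r (y :: s) = (y :: t) :: rest.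
Proof.
elim: s y => [|z s IH] y; first by exists [::], [::].
have [t [rest E]] := IH z; rewrite runsC E /runs_step.
by case: (r y z); [exists (z :: t), rest | exists [::], ((z :: t) :: rest)].
Qed.

Lemma flatten_runs s : flatten (runs r s) = s.
Proof.
elim: s => [|y s IH] //; case: s IH => [|z s] IH //.
have [t [rest E]] := runs_cons_ex z s; rewrite E /= in IH; case: IH => IH; rewrite runsC E /runs_step.
by case: (r y z) => /=; rewrite IH.
Qed.

Lemma size_runs s : size (runs r s) =
  ((s != [::]) + count (fun p => ~~ r p.1 p.2) (zip s (behead s)))%N.
Proof.
elim: s => [|y s IH] //; case: s IH => [|z s] IH //.
have [t [rest E]] := runs_cons_ex z s; rewrite E /= in IH; rewrite runsC E /runs_step.
by case h: (r y z); rewrite /= IH /= h /= ?add0n ?add1n.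
Qed.

Lemma size_runs_le s : (size (runs r s) <= size s)%N.
Proof.
rewrite size_runs; case: s => [|y s] //=.
rewrite add1n ltnS; apply: leq_trans (count_size _ _) _.
by rewrite size_zip minnE /= subKn ?leq_subr // leqnSn.
Qed.

Lemma runs_nil s : (runs r s == [::]) = (s == [::]).
Proof.
case: s => [|y s] //; have [t [rest E]] := runs_cons_ex y s.
by rewrite E.
Qed.

End Runs.

Lemma runs_congr (X : eqType) (r1 r2 : rel X) s :
  {in s &, r1 =2 r2} -> runs r1 s = runs r2 s.
Proof.
elim: s => [|y s IH] // H.
rewrite !runsC IH; last by move=> a b ha hb; apply: H; rewrite inE ?ha ?hb orbT.
case: s IH H => [|z s] IH H //.
have [t [rest E]] := runs_cons_ex r2 z s; rewrite E /runs_step.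
by rewrite H // !inE eqxx ?orbT.
Qed.

Lemma runs_eq_heads (X : eqType) (y0 : X) s :
  sorted (fun c1 c2 => head y0 c1 != head y0 c2) (runs (fun a b => a == b) s).
Proof.
elim: s => [|y s IH] //; case: s IH => [|z s] IH //.
have [t [rest E]] := runs_cons_ex (fun a b => a == b) z s.
rewrite E /= in IH; rewrite runsC E /runs_step.
case: eqP => [->|nyz] /=; first by clear E; case: rest IH.
by rewrite IH andbT; apply/eqP.
Qed.

Lemma sorted_index (X : eqType) (lt : rel X) (s : seq X) :
  irreflexive lt -> transitive lt -> sorted lt s ->
  {in s &, forall a b, lt a b = (index a s < index b s)%N}.
Proof.
move=> irr tr ss a b ha hb.
case: (ltngtP (index a s) (index b s)) => h.
- exact: (sorted_ltn_index tr ss) h.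
- apply/negbTE/negP => lab.
  have lba := (sorted_ltn_index tr ss) _ _ hb ha h.
  by move: (irr a); rewrite (tr _ _ _ lab lba).
- by rewrite (index_inj a ha hb h) irr.
Qed.

Section Ilv.
Variable X : eqType.

Fixpoint ilv (r s : seq X) : seq (seq X) :=
  match r with
  | [::] => [:: s]
  | x :: r' =>
    let fix go (s : seq X) := match s with
      | [::] => [:: x :: r']
      | y :: s' => map (cons x) (ilv r' (y :: s')) ++ map (cons y) (go s')
      end in go s
  end.

Lemma ilv0s s : ilv [::] s = [:: s]. Proof. by []. Qed.
Lemma ilvr0 r : ilv r [::] = [:: r]. Proof. by case: r. Qed.
Lemma ilvcc x r y s : ilv (x :: r) (y :: s) =
  map (cons x) (ilv r (y :: s)) ++ map (cons y) (ilv (x :: r) s).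
Proof. by []. Qed.

Lemma ilv_size r s r' s' : size r = size r' -> size s = size s' ->
  size (ilv r s) = size (ilv r' s').
Proof.
elim: r s r' s' => [|x r IHr] s r' s'.
  by case: r' => // _ _; rewrite !ilv0s.
case: r' => // x' r' [hr]; elim: s s' => [|y s IHs] s'.
  by case: s' => // _; rewrite !ilvr0.
case: s' => // y' s' [hs].
rewrite !ilvcc !size_cat !size_map (IHs s') ?hs //.
by rewrite (IHr (y :: s) r' (y' :: s')) //= hs.
Qed.

Lemma ilv_perm r s t : t \in ilv r s -> perm_eq t (r ++ s).
Proof.
elim: r s t => [|x r IHr] s t; first by rewrite ilv0s inE => /eqP ->.
elim: s t => [|y s IHs] t; first by rewrite ilvr0 inE cats0 => /eqP ->.
rewrite ilvcc mem_cat => /orP[] /mapP[u hu ->].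
  by rewrite /= perm_cons IHr.
have := IHs u hu => h.
apply: (@perm_trans _ (y :: ((x :: r) ++ s))); first by rewrite perm_cons.
by rewrite perm_sym -[y :: s]cat1s perm_catCA.
Qed.

Lemma ilv_subseq r s t : t \in ilv r s -> subseq r t && subseq s t.
Proof.
elim: r s t => [|x r IHr] s t; first by rewrite ilv0s inE sub0seq => /eqP ->; rewrite subseq_refl.
elim: s t => [|y s IHs] t; first by rewrite ilvr0 inE sub0seq => /eqP ->; rewrite andbT subseq_refl.
rewrite ilvcc mem_cat => /orP[] /mapP[u hu ->].
  have /andP[h1 h2] := IHr _ _ hu.
  rewrite /= eqxx h1 /=.
  by case: eqP => _; [exact: subseq_trans (subseq_cons s y) h2 | exact: h2].
have /andP[h1 h2] := IHs _ hu.
rewrite /= eqxx h2 andbT.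
by case: eqP => _; [exact: subseq_trans (subseq_cons r x) h1 | exact: h1].
Qed.
Lemma ilv_uniq r s : uniq (r ++ s) -> uniq (ilv r s).
Proof.
elim: r s => [|x r IHr] s; first by rewrite ilv0s.
elim: s => [|y s IHs]; first by rewrite ilvr0.
move=> U; rewrite ilvcc cat_uniq !map_inj_uniq //; try by move=> a b [].
apply/and3P; split.
- by apply: IHr; move: U; rewrite /= => /andP[].
- apply/hasPn => t /mapP[u hu ->]; apply/mapP => -[v hv [exy _]].
  by move: U; rewrite exy /= mem_cat inE eqxx orbT.
- apply: IHs; move: U; rewrite !cat_uniq /= !inE.
  by case/and4P => -> /negP h _ ->; rewrite andbT /=; apply/negP => hh; apply: h; rewrite hh !orbT.
Qed.

Lemma ilv_sorted (lt : rel X) r s : transitive lt ->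
  {in r & s, forall a b, lt a b || lt b a} ->
  sorted lt r -> sorted lt s -> exists2 t, t \in ilv r s & sorted lt t.
Proof.
move=> tr; elim: r s => [|x r IHr] s.
  by move=> _ _ ss; exists s; rewrite ?ilv0s ?inE.
elim: s => [|y s IHs].
  by move=> _ sr _; exists (x :: r); rewrite ?ilvr0 ?inE.
move=> tot sr ss; rewrite ilvcc.
have sr' : sorted lt r by move: sr => /= /path_sorted.
have ss' : sorted lt s by move: ss => /= /path_sorted.
have := tot x y; rewrite !inE !eqxx => /(_ isT isT) /orP[lxy|lyx].
- have [t ht st] : exists2 t, t \in ilv r (y :: s) & sorted lt t.
    by apply: IHr => // a b ha hb; apply: tot => //; rewrite inE ha orbT.
  exists (x :: t); first by rewrite mem_cat map_f.
  rewrite /= path_sortedE // st andbT.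
  apply/allP => z; rewrite (perm_mem (ilv_perm ht)) mem_cat => /orP[hz|hz].
    by move: sr; rewrite /= path_sortedE // => /andP[/allP H _]; apply: H.
  move: hz; rewrite inE => /orP[/eqP -> //|hz].
  by apply: (tr y x z lxy); move: ss; rewrite /= path_sortedE // => /andP[/allP H _]; apply: H.
- have [t ht st] : exists2 t, t \in ilv (x :: r) s & sorted lt t.
    by apply: IHs => // a b ha hb; apply: tot => //; rewrite inE hb orbT.
  exists (y :: t); first by rewrite mem_cat orbC map_f.
  rewrite /= path_sortedE // st andbT.
  apply/allP => z; rewrite (perm_mem (ilv_perm ht)) mem_cat => /orP[hz|hz].
    move: hz; rewrite inE => /orP[/eqP -> //|hz].
    by apply: (tr x y z lyx); move: sr; rewrite /= path_sortedE // => /andP[/allP H _]; apply: H.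
  by move: ss; rewrite /= path_sortedE // => /andP[/allP H _]; apply: H.
Qed.
End Ilv.
Section Prob.
Local Open Scope ring_scope.
Local Open Scope classical_set_scope.
Variables (R : realType) (A : eqType) (d : measure_display) (T : measurableType d)
  (P : probability T R) (key : T -> term A -> R).
Hypothesis Hinj : forall w, injective (key w).
Hypothesis Hmeas : forall t, measurable_fun setT (fun w => key w t).
Hypothesis Hunif : forall s : seq (term A), uniq s ->
  P [set w | sorted (fun a b => key w a < key w b) s] = ((size s)`!%:R^-1)%:E.

Definition ltw w : rel (term A) := fun a b => key w a < key w b.
Definition Srt (s : seq (term A)) : set T := [set w | sorted (ltw w) s].

Lemma ltw_irr w : irreflexive (ltw w).
Proof. by move=> a; rewrite /ltw ltxx. Qed.
Lemma ltw_tr w : transitive (ltw w).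
Proof. by move=> b a c; rewrite /ltw; apply: lt_trans. Qed.

Lemma meas_lt a b : measurable [set w | ltw w a b].
Proof.
have := measurable_fun_ltr (Hmeas a) (Hmeas b) measurableT (Y := [set true]) I.
by rewrite setTI.
Qed.

Lemma Srt_meas s : measurable (Srt s).
Proof.
elim: s => [|a s IH].
  by rewrite (_ : Srt [::] = setT) //; apply/seteqP; split.
case: s IH => [|b s] IH.
  by rewrite (_ : Srt [:: a] = setT) //; apply/seteqP; split.
have -> : Srt [:: a, b & s] = [set w | ltw w a b] `&` Srt (b :: s).
  by apply/seteqP; split => w /=; rewrite /Srt /= => /andP.
exact: measurableI (meas_lt a b) IH.
Qed.

Lemma srt_ex w V : uniq V -> exists2 pi, pi \in permutations V & Srt pi w.
Proof.
move=> uV; exists (sort (fun a b => key w a <= key w b) V).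
  by rewrite mem_permutations perm_sort.
have up : uniq (sort (fun a b => key w a <= key w b) V) by rewrite sort_uniq.
have H : sorted (fun x y : R => x < y)
    (map (key w) (sort (fun a b => key w a <= key w b) V)).
  rewrite lt_sorted_uniq_le map_inj_uniq // up /= sorted_map.
  by apply: sort_sorted => a b; apply: le_total.
by move: H; rewrite sorted_map.
Qed.

Lemma srt_uniq w p1 p2 : perm_eq p1 p2 -> Srt p1 w -> Srt p2 w -> p1 = p2.
Proof.
move=> pe s1 s2; apply: (irr_sorted_eq (@ltw_tr w) (@ltw_irr w) s1 s2).
by apply: perm_mem.
Qed.

Lemma srt_index w pi : Srt pi w ->
  {in pi &, forall a b, ltw w a b = (index a pi < index b pi)%N}.
Proof. by move=> s; apply: sorted_index => //; [exact: ltw_irr | exact: ltw_tr]. Qed.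

Lemma srt_same w w' pi : Srt pi w -> Srt pi w' ->
  {in pi &, forall a b, ltw w a b = ltw w' a b}.
Proof. by move=> s s' a b ha hb; rewrite (srt_index s) // (srt_index s'). Qed.

Definition p (E : set T) : R := fine (P E).

Lemma PE E : measurable E -> P E = (p E)%:E.
Proof. by move=> mE; rewrite /p fineK // fin_num_measure. Qed.

Lemma p_ge0 E : measurable E -> 0 <= p E.
Proof. by move=> mE; rewrite -lee_fin -PE. Qed.

Lemma p_le E F : measurable E -> measurable F -> E `<=` F -> p E <= p F.
Proof. by move=> mE mF EF; rewrite -lee_fin -!PE //; apply: le_measure; rewrite ?inE. Qed.

Lemma p0 : p set0 = 0.
Proof. by rewrite /p measure0. Qed.

Lemma pU E F : measurable E -> measurable F -> E `&` F = set0 -> p (E `|` F) = p E + p F.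
Proof.
move=> mE mF EF; apply: EFin_inj; rewrite EFinD -!PE //; last exact: measurableU.
by rewrite measureU.
Qed.

Lemma pT : p setT = 1.
Proof. by rewrite /p probability_setT. Qed.

Lemma in_bigsetU (I : eqType) (F : I -> set T) (l : seq I) w :
  (\big[setU/set0]_(i <- l) F i) w -> exists2 i, i \in l & F i w.
Proof.
elim: l => [|i l IH]; first by rewrite big_nil.
rewrite big_cons => -[Fi|/IH [j jl Fj]]; first by exists i; rewrite ?inE ?eqxx.
by exists j; rewrite ?inE ?jl ?orbT.
Qed.

Lemma bigsetU_in (I : eqType) (F : I -> set T) (l : seq I) w i :
  i \in l -> F i w -> (\big[setU/set0]_(i <- l) F i) w.
Proof.
elim: l => [|j l IH] //; rewrite inE big_cons => /orP[/eqP ->|il] Fi; first by left.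
by right; apply: IH.
Qed.

Lemma p_bigU (I : eqType) (F : I -> set T) (l : seq I) : uniq l ->
  (forall i, measurable (F i)) ->
  {in l &, forall i j, i != j -> F i `&` F j = set0} ->
  p (\big[setU/set0]_(i <- l) F i) = \sum_(i <- l) p (F i).
Proof.
elim: l => [|i l IH] /=; first by rewrite !big_nil p0.
move=> /andP[il ul] mF dis; rewrite !big_cons pU //.
- rewrite IH // => a b ha hb; apply: dis => //; rewrite inE ?ha ?hb orbT //.
- exact: bigsetU_measurable (fun j _ => mF j).
- apply/seteqP; split => // w [Fi /in_bigsetU [j jl Fj]].
  have ij : i != j by apply: contraNneq il => ->.
  by rewrite -(dis i j) ?inE ?eqxx ?jl ?orbT.
Qed.

Lemma p_part E V : measurable E -> uniq V ->
  p E = \sum_(pi <- permutations V) p (E `&` Srt pi).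
Proof.
move=> mE uV; rewrite -p_bigU ?permutations_uniq //.
- congr p; apply/seteqP; split => w.
    move=> Ew; have [pi hpi spi] := srt_ex w uV.
    by apply: (bigsetU_in hpi).
  by move=> /in_bigsetU [pi _ []].
- by move=> pi; apply: measurableI => //; apply: Srt_meas.
- move=> p1 p2 h1 h2 ne; apply/seteqP; split => // w [[_ s1] [_ s2]].
  move: h1 h2; rewrite !mem_permutations => h1 h2.
  have pe : perm_eq p1 p2 by apply: perm_trans h1 _; rewrite perm_sym.
  by move: ne; rewrite (srt_uniq pe s1 s2) eqxx.
Qed.

Definition dep (U : seq (term A)) (E : set T) :=
  forall w w', {in U &, forall a b, ltw w a b = ltw w' a b} -> E w -> E w'.

Lemma dep_piece U E pi : dep U E -> perm_eq pi (undup U) ->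
  E `&` Srt pi = Srt pi \/ E `&` Srt pi = set0.
Proof.
move=> dE pe.
case: (pselect (exists w, E w /\ Srt pi w)) => [[w0 [Ew0 s0]]|nex].
  left; apply/seteqP; split => w; first by case.
  move=> sw; split => //; apply: (dE w0) => // a b ha hb.
  by apply: (srt_same s0 sw); rewrite (perm_mem pe) mem_undup.
right; apply/seteqP; split => // w [Ew sw]; apply: nex; by exists w.
Qed.

Lemma dep_meas U E : dep U E -> measurable E.
Proof.
move=> dE.
have -> : E = \big[setU/set0]_(pi <- permutations (undup U)) (E `&` Srt pi).
  apply/seteqP; split => w.
    move=> Ew; have [pi hpi spi] := srt_ex w (undup_uniq U).
    by apply: (bigsetU_in hpi).
  by move=> /in_bigsetU [pi _ []].
rewrite big_seq; apply: bigsetU_measurable => pi hpi.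
rewrite mem_permutations in hpi.
by case: (dep_piece dE hpi) => ->; [apply: Srt_meas | apply: measurable0].
Qed.

Lemma dep_sub U U' E : {subset U <= U'} -> dep U E -> dep U' E.
Proof. by move=> sU dE w w' h; apply: dE => a b ha hb; apply: h; apply: sU. Qed.

Lemma depI U U' E F : dep U E -> dep U' F -> dep (U ++ U') (E `&` F).
Proof.
move=> dE dF w w' h [Ew Fw]; split.
  by apply: (dE w) => // a b ha hb; apply: h; rewrite mem_cat ?ha ?hb.
by apply: (dF w) => // a b ha hb; apply: h; rewrite mem_cat ?ha ?hb orbT.
Qed.

Lemma dep_Srt pi : dep pi (Srt pi).
Proof.
move=> w w' h; rewrite /Srt /= => s.
by rewrite -(eq_in_sorted (P := mem pi) (e := ltw w)) //; apply/allP.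
Qed.

Lemma dep_setT : dep [::] setT. Proof. by []. Qed.

Lemma p_Srt s : uniq s -> p (Srt s) = ((size s)`!%:R)^-1.
Proof. by move=> us; rewrite /p /Srt Hunif. Qed.

Lemma ilv_Srt r s : uniq (r ++ s) ->
  Srt r `&` Srt s = \big[setU/set0]_(t <- ilv r s) Srt t.
Proof.
move=> urs; apply/seteqP; split => w.
  move=> [sr ss].
  have tot : {in r & s, forall a b, ltw w a b || ltw w b a}.
    move=> a b ha hb; rewrite /ltw; case: (ltgtP (key w a) (key w b)) => // /Hinj eab.
    by move: urs; rewrite cat_uniq => /and3P[_ /hasPn H _]; move: (H b hb); rewrite -eab ha.
  have [t ht st] := ilv_sorted (@ltw_tr w) tot sr ss.
  by apply: (bigsetU_in ht).
move=> /in_bigsetU [t ht st]; have /andP[h1 h2] := ilv_subseq ht.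
by split; [exact: (subseq_sorted (@ltw_tr w) h1 st) | exact: (subseq_sorted (@ltw_tr w) h2 st)].
Qed.

Lemma p_ilv r s : uniq (r ++ s) ->
  p (Srt r `&` Srt s) = (size (ilv r s))%:R / ((size r + size s)`!)%:R.
Proof.
move=> urs; rewrite ilv_Srt // p_bigU ?ilv_uniq //.
- rewrite (eq_big_seq (fun _ => ((size r + size s)`!%:R)^-1)).
    by rewrite big_const_seq count_predT iter_addr_0 mulr_natl.
  move=> t ht; rewrite p_Srt; last by rewrite (perm_uniq (ilv_perm ht)).
  by rewrite (perm_size (ilv_perm ht)) size_cat.
- by move=> t; apply: Srt_meas.
- move=> t1 t2 h1 h2 ne; apply/seteqP; split => // w [s1 s2].
  have pe : perm_eq t1 t2.
    by apply: perm_trans (ilv_perm h1) _; rewrite perm_sym (ilv_perm h2).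
  by move: ne; rewrite (srt_uniq pe s1 s2) eqxx.
Qed.


Lemma dep_pair U E a b : dep U E -> a \notin U -> b \notin U -> a != b ->
  p (E `&` Srt [:: a; b]) = p (E `&` Srt [:: b; a]).
Proof.
move=> dE aU bU ab; have mE := dep_meas dE.
have m1 : measurable (E `&` Srt [:: a; b]) by apply: measurableI => //; apply: Srt_meas.
have m2 : measurable (E `&` Srt [:: b; a]) by apply: measurableI => //; apply: Srt_meas.
rewrite (p_part m1 (undup_uniq U)) (p_part m2 (undup_uniq U)).
apply: eq_big_seq => pi; rewrite mem_permutations => hpi.
rewrite -!setIA ![Srt [:: _; _] `&` Srt pi]setIC !setIA.
have upi : forall c e, c \notin U -> e \notin U -> c != e -> uniq (pi ++ [:: c; e]).
  move=> c e cU eU ce; rewrite cat_uniq (perm_uniq hpi) undup_uniq /= inE ce /= andbT.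
  by rewrite !(perm_mem hpi) !mem_undup (negbTE cU) (negbTE eU).
case: (dep_piece dE hpi) => ->; last by rewrite !set0I.
rewrite !p_ilv ?upi //; last by rewrite eq_sym.
by rewrite (@ilv_size _ pi [:: a; b] pi [:: b; a]).
Qed.

Lemma dep_half U E a b : dep U E -> a \notin U -> b \notin U -> a != b ->
  p (E `&` Srt [:: b; a]) = p E / 2.
Proof.
move=> dE aU bU ab; have mE := dep_meas dE.
have m1 : measurable (E `&` Srt [:: a; b]) by apply: measurableI => //; apply: Srt_meas.
have m2 : measurable (E `&` Srt [:: b; a]) by apply: measurableI => //; apply: Srt_meas.
have : p E = p (E `&` Srt [:: a; b]) + p (E `&` Srt [:: b; a]).
  rewrite -pU //.
    congr p; apply/seteqP; split => w; last by case=> -[].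
    move=> Ew; rewrite /Srt /= !andbT /ltw.
    case: (ltgtP (key w a) (key w b)) => h; [by left | by right | ].
    by move/Hinj: h => h; move: ab; rewrite h eqxx.
  apply/seteqP; split => // w [[_]]; rewrite /Srt /= !andbT /ltw => h1 [_ h2].
  by move: (lt_trans h1 h2); rewrite ltxx.
rewrite (dep_pair dE) //.
by move=> ->; field.
Qed.

Variable x : seq A.

Definition lev w l := ddt_level (key w) x l.

Definition idx (t : term A) : nat :=
  match t with Chr _ => 0 | Dup l _ _ => l | Inc l _ => l end.

Lemma idx_node l c : idx (ddt_node l c) = l.
Proof. by rewrite /ddt_node; case: ifP. Qed.

Definition cmp (pi : seq (term A)) : rel (term A) :=
  fun a b => (index a pi < index b pi)%N.

Definition next1 l pi (L : seq (term A)) : seq (term A) :=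
  map (ddt_node l.+1)
    (if odd l.+1 then runs (fun a b => a == b) L else runs (cmp pi) L).

Lemma lev_next w l pi : Srt pi w -> perm_eq pi (undup (lev w l)) ->
  lev w l.+1 = next1 l pi (lev w l).
Proof.
move=> s pe; rewrite /lev /= /ddt_groups /next1 -/(lev w l); case: ifP => // _.
congr map; apply: runs_congr => a b ha hb /=.
have := srt_index s; rewrite /ltw => -> //; by rewrite (perm_mem pe) mem_undup.
Qed.

Lemma lev_next_odd w l pi : odd l.+1 -> lev w l.+1 = next1 l pi (lev w l).
Proof. by move=> o; rewrite /lev /= /ddt_groups /next1 o. Qed.

Fixpoint reach (l : nat) : seq (seq (term A)) :=
  match l with
  | 0 => [:: map Chr x]
  | l'.+1 => flatten (map (fun L => map (fun pi => next1 l' pi L)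
                                    (permutations (undup L))) (reach l'))
  end.

Lemma lev_reach w l : lev w l \in reach l.
Proof.
elim: l => [|l IH]; first by rewrite inE.
have [pi hpi spi] := srt_ex w (undup_uniq (lev w l)).
rewrite (lev_next spi); last by rewrite -mem_permutations.
by apply/flatten_mapP; exists (lev w l) => //; apply: map_f.
Qed.

Definition W l := flatten (flatten (map reach (iota 0 l))).

Lemma W_mem l k L t : (k < l)%N -> L \in reach k -> t \in L -> t \in W l.
Proof.
move=> kl hL ht; apply/flattenP; exists L => //; apply/flatten_mapP; exists k => //.
by rewrite mem_iota.
Qed.

Lemma lev_same w w' l : {in W l &, forall a b, ltw w a b = ltw w' a b} ->
  forall k, (k <= l)%N -> lev w k = lev w' k.
Proof.
move=> h; elim => [|k IH] // kl.
have IH' := IH (ltnW kl).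
rewrite /lev /= -/(lev w k) -/(lev w' k) -IH' /ddt_groups; case: ifP => // _.
congr map; apply: runs_congr => a b ha hb /=; apply: h.
- by apply: (W_mem kl (lev_reach w k)).
- by apply: (W_mem kl (lev_reach w k)).
Qed.

Lemma groups_same w w' l : {in W l &, forall a b, ltw w a b = ltw w' a b} ->
  forall k, (k < l)%N ->
  ddt_groups (key w) k.+1 (lev w k) = ddt_groups (key w') k.+1 (lev w' k).
Proof.
move=> h k kl; rewrite -(lev_same h (ltnW kl)) /ddt_groups; case: ifP => // _.
apply: runs_congr => a b ha hb /=; apply: h.
- by apply: (W_mem kl (lev_reach w k)).
- by apply: (W_mem kl (lev_reach w k)).
Qed.

Lemma dep_lev (phi : seq (term A) -> Prop) l :
  dep (W l.+1) [set w | phi (lev w l)].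
Proof. by move=> w w' h /=; rewrite (lev_same h (leqnSn l)). Qed.

Lemma count_natr (X : Type) (f : pred X) s :
  (count f s)%:R = \sum_(q <- s) (f q)%:R :> R.
Proof. by elim: s => [|y s IH]; rewrite ?big_nil ?big_cons //= natrD IH. Qed.

Lemma sorted_zip (X : eqType) (r : rel X) s :
  sorted r s -> all (fun q => r q.1 q.2) (zip s (behead s)).
Proof.
elim: s => [|a s IH] //; case: s IH => [|b s] IH //= /andP[hab hs].
by rewrite hab IH.
Qed.

Lemma mem_zip2 (X Y : eqType) (s : seq X) (t : seq Y) a b :
  (a, b) \in zip s t -> a \in s /\ b \in t.
Proof.
elim: s t => [|c s IH] [|e t] //=; rewrite inE => /orP[/eqP [-> ->]|h].
  by rewrite !inE !eqxx.
by have [h1 h2] := IH _ h; rewrite !inE h1 h2 !orbT.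
Qed.

Definition Sz j := [set w | (2 <= size (lev w j))%N].

Lemma Sz_meas j : measurable (Sz j).
Proof. exact: (dep_meas (@dep_lev (fun L => is_true (2 <= size L)%N) j)). Qed.

Lemma pair_term U Q pi a b : dep U Q -> a \in pi -> b \in pi -> a != b ->
  p ((Q `&` Srt [:: b; a]) `&` Srt pi) = (~~ cmp pi a b)%:R * p (Q `&` Srt pi).
Proof.
move=> dQ ha hb ab.
have hab : index a pi != index b pi.
  by apply: contra ab => /eqP /(index_inj a ha hb) ->.
case h: (cmp pi a b) => /=; rewrite ?mul1r ?mul0r.
- rewrite -p0; congr p; apply/seteqP; split => // w [[_]].
  rewrite /Srt /= andbT => h1 sw; move: h1; rewrite (srt_index sw) //.
  by move: h; rewrite /cmp => h h'; move: (ltn_trans h h'); rewrite ltnn.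
- congr p; apply/seteqP; split => w; first by case=> -[].
  move=> [Qw sw]; do 2!split => //; rewrite /Srt /= andbT (srt_index sw) //.
  by move: h hab; rewrite /cmp; case: ltngtP.
Qed.

Lemma main_ind K : forall l L U Q, odd l -> all (fun t => idx t == l) L ->
  sorted (fun a b => a != b) L -> L != [::] -> dep U Q ->
  all (fun t => idx t < l)%N U -> (forall w, Q w -> lev w l = L) ->
  p (Q `&` Sz (l + K.*2)) <= (size L).-1%:R / 2 ^+ K * p Q.
Proof.
have mQ U Q : dep U Q -> measurable Q by apply: dep_meas.
elim: K => [|K IH] l L U Q ol hidx adj nL dQ hU QL.
  rewrite addn0 expr0 divr1.
  case: (leqP 2 (size L)) => hL.
  - have -> : Q `&` Sz l = Q.
      apply/seteqP; split => w; first by case.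
      by move=> Qw; split => //; rewrite /Sz /= QL.
    rewrite -{1}(mul1r (p Q)) ler_wpM2r ?p_ge0 //; first exact: (mQ U).
    by rewrite ler1n -ltnS prednK // (leq_trans _ hL).
  - have -> : Q `&` Sz l = set0.
      apply/seteqP; split => // w [Qw]; rewrite /Sz /= QL //.
      by rewrite leqNgt hL.
    by rewrite p0 mulr_ge0 ?p_ge0 //; exact: (mQ U).
set V := undup L.
have mQS : measurable (Q `&` Sz (l + K.+1.*2)) by apply: measurableI; [apply: (mQ U) | apply: Sz_meas].
rewrite (p_part mQS (undup_uniq L)).
pose L2 pi := next1 l.+1 [::] (next1 l pi L).
pose desc pi := count (fun q => ~~ cmp pi q.1 q.2) (zip L (behead L)).
have ol2 : odd l.+2 by rewrite /= negbK.
have e1 : odd l.+1 = false by rewrite /= ol.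
have step : forall pi, pi \in permutations V ->
    p ((Q `&` Sz (l + K.+1.*2)) `&` Srt pi) <=
    (desc pi)%:R / 2 ^+ K * p (Q `&` Srt pi).
  move=> pi; rewrite mem_permutations => hpi.
  have -> : (Q `&` Sz (l + K.+1.*2)) `&` Srt pi = (Q `&` Srt pi) `&` Sz (l.+2 + K.*2).
    rewrite setIAC doubleS !addnS !addSn; reflexivity.
  apply: le_trans (IH l.+2 (L2 pi) (U ++ V) _ ol2 _ _ _ _ _ _) _.
  - rewrite all_map; apply/allP => c _ /=; by rewrite idx_node.
  - rewrite /L2 /next1 ol2 sorted_map.
    apply: sub_sorted (runs_eq_heads (Inc 0 [::]) _) => c1 c2 /=.
    by rewrite /ddt_node ol2; apply: contra => /eqP [_ ->].
  - rewrite /L2 /next1 ol2 e1 -size_eq0 size_map size_eq0 runs_nil.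
    by rewrite -size_eq0 size_map size_eq0 runs_nil.
  - apply: depI => //; apply: dep_sub (@dep_Srt pi) => t.
    by rewrite (perm_mem hpi).
  - rewrite all_cat; apply/andP; split; apply/allP => t ht.
      by move/allP: hU => /(_ t ht) /=; lia.
    rewrite mem_undup in ht.
    by move/allP: hidx => /(_ t ht) /eqP /= ->; lia.
  - move=> w [Qw sw]; rewrite (@lev_next_odd w l.+1 [::] ol2) (@lev_next w l pi sw).
      by rewrite (QL w Qw).
    by rewrite (QL w Qw).
  - apply: ler_wpM2r; first by apply: p_ge0; apply: measurableI; [apply: (mQ U)|apply: Srt_meas].
    apply: ler_wpM2r; first by rewrite invr_ge0 exprn_ge0.
    rewrite ler_nat; have nL1 : next1 l pi L != [::].
      by rewrite /next1 e1 -size_eq0 size_map size_eq0 runs_nil.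
    apply: (@leq_trans (size (next1 l pi L)).-1).
      by rewrite -!subn1 leq_sub2r // /L2 [next1 l.+1 _ _]/next1 ol2 size_map size_runs_le.
    by rewrite /next1 e1 size_map size_runs nL.
apply: (@le_trans _ _ (\sum_(pi <- permutations V) (desc pi)%:R / 2 ^+ K * p (Q `&` Srt pi))).
  by rewrite big_seq [X in _ <= X]big_seq; apply: ler_sum => pi hpi; exact: step.
have adjz := sorted_zip adj.
have hq : forall q, q \in zip L (behead L) ->
    \sum_(pi <- permutations V) (~~ cmp pi q.1 q.2)%:R * p (Q `&` Srt pi) = p Q / 2.
  move=> [a b] hq /=.
  have [aL bL] : a \in L /\ b \in L.
    by have [ha hb] := mem_zip2 hq; split => //; apply: mem_behead.
  have ab : a != b by move/allP: adjz => /(_ _ hq).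
  have nU : forall t, t \in L -> t \notin U.
    move=> t tL; apply/negP => tU.
    move/allP: hU => /(_ t tU); move/allP: hidx => /(_ t tL) /eqP ->.
    by rewrite ltnn.
  rewrite -(dep_half dQ (nU a aL) (nU b bL) ab).
  have mE : measurable (Q `&` Srt [:: b; a]) by apply: measurableI; [apply: (mQ U)|apply: Srt_meas].
  rewrite (p_part mE (undup_uniq L)); apply: eq_big_seq => pi.
  rewrite mem_permutations => hpi.
  by rewrite (pair_term dQ) // (perm_mem hpi) mem_undup.
have E1 : \sum_(pi <- permutations V) (desc pi)%:R / 2 ^+ K * p (Q `&` Srt pi) =
    (2 ^+ K)^-1 * \sum_(q <- zip L (behead L))
       \sum_(pi <- permutations V) (~~ cmp pi q.1 q.2)%:R * p (Q `&` Srt pi).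
  rewrite exchange_big mulr_sumr; apply: eq_bigr => pi _.
  rewrite /desc count_natr !mulr_suml mulr_sumr; apply: eq_bigr => q _.
  by rewrite [RHS]mulrA [2 ^- K * _]mulrC.
rewrite E1 (eq_big_seq (fun _ => p Q / 2)) // big_const_seq count_predT iter_addr_0.
rewrite size_zip size_behead minnE subKn ?leq_pred //.
rewrite -mulr_natr exprS le_eqVlt; apply/orP; left; apply/eqP.
have h2 : (2 : R) ^+ K != 0 by rewrite expf_neq0.
by field.
Qed.

Lemma lev_nil w l : x != [::] -> lev w l != [::].
Proof.
move=> nx; elim: l => [|l IH]; first by rewrite /lev /= -size_eq0 size_map size_eq0.
rewrite /lev /= -/(lev w l) -size_eq0 size_map size_eq0 /ddt_groups.
by case: ifP => _; rewrite runs_nil.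
Qed.

Definition L1 := next1 0 [::] (map Chr x).

Lemma tail_bound K : x != [::] -> p (Sz (1 + K.*2)) <= (size x)%:R / 2 ^+ K.
Proof.
move=> nx.
have mT : measurable (@setT T) by [].
have := @main_ind K 1 L1 [::] setT isT.
rewrite setTI pT mulr1 => H; apply: le_trans (H _ _ _ _ _ _) _.
- by rewrite /L1 /next1 all_map; apply/allP => c _ /=; rewrite ?idx_node.
- rewrite /L1 /next1 /= sorted_map.
  apply: sub_sorted (runs_eq_heads (Inc 0 [::]) _) => c1 c2 /=.
  by rewrite /ddt_node /=; apply: contra => /eqP [_ ->].
- by rewrite /L1 /next1 -size_eq0 size_map size_eq0 runs_nil -size_eq0 size_map size_eq0.
- by [].
- by [].
- by move=> w _; rewrite (@lev_next_odd w 0 [::]).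
- apply: ler_wpM2r; first by rewrite invr_ge0 exprn_ge0.
  rewrite ler_nat /L1 /next1 size_map (leq_trans (leq_pred _)) //.
  by apply: leq_trans (size_runs_le _ _) _; rewrite size_map.
Qed.

Lemma anc_same w w' l i : {in W l &, forall a b, ltw w a b = ltw w' a b} ->
  forall k, (k <= l)%N -> ddt_anc (key w) x i k = ddt_anc (key w') x i k.
Proof.
move=> h; elim => [|k IH] // kl /=.
rewrite IH ?(ltnW kl) //.
by have := groups_same h kl; rewrite /lev => ->.
Qed.

Definition Tgt (C : R) (i : nat) := [set w | exists H : nat,
  ddt_height_is (key w) x H /\
  ((inc_on_path (key w) x H i)%:R <= C * (ln ((size x)%:R) / ln 2))].

Lemma Tgt_meas C i : measurable (Tgt C i).
Proof.
have -> : Tgt C i = \bigcup_H [set w | ddt_height_is (key w) x H /\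
      ((inc_on_path (key w) x H i)%:R <= C * (ln ((size x)%:R) / ln 2))].
  by apply/seteqP; split => w /= [H hH]; exists H.
apply: bigcupT_measurable => H; apply: (@dep_meas (W H.+1)).
move=> w w' h /= [[h1 h2] h3].
have eL : forall k, (k <= H.+1)%N -> ddt_level (key w) x k = ddt_level (key w') x k.
  by move=> k hk; have := lev_same h hk.
split; first split.
- by rewrite -eL.
- by move=> l lH; rewrite -eL; [apply: h2 | lia].
- suff -> : inc_on_path (key w') x H i = inc_on_path (key w) x H i by [].
  apply: eq_in_count => l; rewrite mem_iota /= add0n => hl.
  by rewrite -eL ?(ltnW hl) // (anc_same i h (ltnW hl)).
Qed.

Lemma good_in_Tgt C i K : x != [::] ->
  (2 * K.+1)%:R <= C * (ln ((size x)%:R) / ln 2) ->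
  ~` Sz (1 + K.*2) `<=` Tgt C i.
Proof.
move=> nx hC w /= hw.
have h1 : size (lev w (1 + K.*2)) == 1%N.
  have hw' : ~ (2 <= size (lev w (1 + K.*2)))%N := hw.
  have hn := lev_nil w (1 + K.*2) nx; rewrite -size_eq0 in hn.
  by move: hw' hn; case: (size (lev w (1 + K.*2))) => [|[|n]].
have ex : exists l, size (lev w l) == 1%N by exists (1 + K.*2).
case: (ex_minnP ex) => H /eqP hH hmin.
exists H; split; first split => //.
  by move=> l lH /eqP /hmin; rewrite leqNgt lH.
apply: le_trans hC; rewrite ler_nat /inc_on_path.
apply: leq_trans (count_size _ _) _; rewrite size_iota.
have := hmin _ h1; rewrite -addnn; lia.
Qed.

Lemma final_prob C i K (bound : R) : x != [::] ->
  (2 * K.+1)%:R <= C * (ln ((size x)%:R) / ln 2) ->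
  (size x)%:R / 2 ^+ K <= bound ->
  ((1 - bound)%:E <= P (Tgt C i))%E.
Proof.
move=> nx hC hb.
have mS := Sz_meas (1 + K.*2).
apply: (@le_trans _ _ (P (~` Sz (1 + K.*2)))).
  rewrite probability_setC // (PE mS) -EFinB lee_fin lerB //.
  by apply: le_trans (tail_bound K nx) hb.
apply: le_measure; rewrite ?inE; [exact: measurableC | exact: Tgt_meas | exact: good_in_Tgt].
Qed.
End Prob.

Local Open Scope ring_scope.
Local Open Scope classical_set_scope.

Lemma final_arith (R : realType) (c : R) (n : nat) : 0 < c -> (2 <= n)%N ->
  let K := (Num.truncn ((c + 1) * (ln (n%:R : R) / ln 2))).+1 in
  (2 * K.+1)%:R <= (2 * c + 6) * (ln (n%:R : R) / ln 2) /\
  n%:R / 2 ^+ K <= n%:R `^ (- c).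
Proof.
move=> c0 n2 K.
have ln2 : 0 < ln (2 : R) by apply: ln_gt0; lra.
have n0 : (0 : R) < n%:R by rewrite ltr0n; lia.
have lnn : ln (2 : R) <= ln (n%:R : R).
  by rewrite ler_ln ?posrE ?ler_nat //; lra.
have lg1 : 1 <= ln (n%:R : R) / ln 2 by rewrite ler_pdivlMr // mul1r.
rewrite /K; set L := ln (n%:R : R) / ln 2 in lg1 *.
set y := (c + 1) * L.
have y0 : 0 <= y by apply: mulr_ge0; [lra | lra].
have [ty1 ty2] : (Num.truncn y)%:R <= y /\ y < (Num.truncn y).+1%:R.
  by have /andP[] := truncn_itv y0.
have ey : y = (c + 1) * L by [].
have eL : L = ln (n%:R : R) / ln 2 by [].
clearbody y L.
split.
  have e : (2 * c + 6) * L = 2 * y + 4 * L by rewrite ey; ring.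
  rewrite e natrM -addn2 natrD; lra.
have eK : forall k : nat, (2 : R) ^+ k = expR (k%:R * ln 2).
  by move=> k; rewrite mulr_natl -lnXn ?lnK // posrE exprn_gt0.
have en : (n%:R : R) = expR (ln n%:R) by rewrite lnK // posrE.
rewrite /powR ifN; last by rewrite gt_eqF.
rewrite eK {1}en -expRN -expRD ler_expR.
have : (c + 1) * ln (n%:R : R) <= (Num.truncn y).+1%:R * ln 2.
  have : y * ln 2 <= (Num.truncn y).+1%:R * ln 2 by rewrite ler_pM2r //; apply: ltW.
  by rewrite ey eL -!mulrA mulVf ?mulr1 // gt_eqF.
lra.
Qed.

Theorem mainTheorem9 (R : realType) :
  forall c : R, 0 < c ->
  exists C : R,
  forall (A : eqType) (n : nat) (x : seq A) (i : 'I_n),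
    (2 <= n)%N -> size x = n ->
  forall (d : measure_display) (T : measurableType d) (P : probability T R)
         (key : T -> term A -> R),
    (forall w, injective (key w)) ->
    (forall t, measurable_fun setT (fun w => key w t)) ->
    (forall s : seq (term A), uniq s ->
       P [set w | sorted (fun a b => key w a < key w b) s]
       = ((size s)`!%:R^-1)%:E) ->
    ((1 - (n%:R `^ (- c)))%:E <=
       P [set w | exists H : nat, ddt_height_is (key w) x H /\
                  ((inc_on_path (key w) x H i)%:R <= C * (ln (n%:R) / ln 2))%R])%E.
Proof.
move=> c c0; exists (2 * c + 6) => A n x i n2 sx d T P key Hinj Hmeas Hunif.
have [h1 h2] := final_arith c0 n2.
have nx : x != [::] by rewrite -size_eq0 sx; lia.
subst n.
exact: (final_prob Hinj Hmeas Hunif i nx h1 h2).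
Qed.
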